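(* Let $G$ be a finite graph, let $C$ be a proper coloring of $G$ with exactly $\chi(G)$ colors, and let $C_1$ be one color class of $C$. Let $\mathcal{G}\le \mathrm{Aut}(G)$ be the subgroup of all automorphisms $A$ with $A(C_1)=C_1$ (setwise), and assume $|\mathcal{G}|\ge 2$; let $r$ be the least prime dividing $|\mathcal{G}|$. For $A\in\mathcal{G}$ let $\theta_A$ be the number of distinct orbits of the cyclic group $\langle A\rangle$ on $C_1$. If for some integer $t\ge 2$ $$\sum_{A\in\mathcal{G}} t^{\theta_A-|C_1|}<r,$$ then $\chi_D(G)\le \chi(G)+t-1$. In particular, with $F(C_1):=\max_{A\in\mathcal{G},\,A\neq I}|\{v\in C_1: A(v)=v\}|$, if $F(C_1)<|C_1|-2\log_t|\mathcal{G}|$ for some integer $t\ge2$, then $\chi_D(G)\le\chi(G)+t-1$.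
   Context: For a graph $G$, a coloring of $V(G)$ is distinguishing if the only automorphism of $G$ that maps every color class onto itself (setwise) is the identity. The distinguishing chromatic number $\chi_D(G)$ is the minimum number of colors in a coloring of $G$ that is both proper and distinguishing. $\chi(G)$ is the chromatic number. *)

(* Defs.v *)
From Stdlib Require Import Reals.
From HB Require Import structures.
From mathcomp Require Import all_boot all_order all_algebra all_fingroup.
Set Implicit Arguments. Unset Strict Implicit. Unset Printing Implicit Defensive.
Import GRing.Theory Num.Theory.

Section GraphDefs.
Variable T : finType.
Variable e : rel T.   (* a finite simple graph: symmetric irreflexive relation *)

Definition proper_col (k : nat) (c : T -> 'I_k) : bool :=
  [forall x, forall y, e x y ==> (c x != c y)].

Definition color_class (k : nat) (c : T -> 'I_k) (i : 'I_k) : {set T} :=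
  [set x | c x == i].

Definition is_aut (f : {perm T}) : bool :=
  [forall x, forall y, e (f x) (f y) == e x y].

Definition Aut : {set {perm T}} := [set f | is_aut f].

Definition distinguishing (k : nat) (c : T -> 'I_k) : bool :=
  [forall f : {perm T},
     (is_aut f && [forall i : 'I_k, f @: color_class c i == color_class c i])
       ==> (f == 1%g)].

Definition has_proper_col (k : nat) : bool :=
  [exists c : {ffun T -> 'I_k}, proper_col c].

Definition has_pd_col (k : nat) : bool :=
  [exists c : {ffun T -> 'I_k}, proper_col c && distinguishing c].

(* chromatic number: least k admitting a proper k-coloring
   (for a loopless graph k = #|T| always works, so the bound is attained) *)
Definition chi : nat :=
  \big[minn/#|T|]_(k < #|T|.+1 | has_proper_col k) (k : nat).

Definition chiD : nat :=
  \big[minn/#|T|]_(k < #|T|.+1 | has_pd_col k) (k : nat).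

Definition stab_aut (C1 : {set T}) : {set {perm T}} :=
  [set A in Aut | A @: C1 == C1].

Definition theta (A : {perm T}) (C1 : {set T}) : nat :=
  #|[set orbit 'P <[A]> x | x in C1]|.

Definition Ffix (C1 : {set T}) : nat :=
  \max_(A in stab_aut C1 :\ 1%g) #|[set v in C1 | A v == v]|.

End GraphDefs.

(* Main.v *)
Require Import Defs.
From Stdlib Require Import Reals.
From HB Require Import structures.
From mathcomp Require Import all_boot all_order all_algebra all_fingroup.
Import GRing.Theory Num.Theory.
From Stdlib Require Import Lra.
From mathcomp Require Import zify.
Set Implicit Arguments. Unset Strict Implicit. Unset Printing Implicit Defensive.
Import Order.TTheory.

Section S.
Variable T : finType.

Lemma orbit_iter (A : {perm T}) x y : y \in orbit 'P <[A]> x -> exists n, y = iter n A x.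
Proof. by case/orbitP => a /cycleP [n ->] <-; exists n; rewrite /= apermE permX. Qed.

Lemma iter_in (A : {perm T}) (C1 : {set T}) n x :
  A @: C1 = C1 -> x \in C1 -> iter n A x \in C1.
Proof.
move=> hA xC; elim: n => //= n IH; by rewrite -hA imset_f.
Qed.

Lemma fix_orbit (t : nat) (g : T -> 'I_t) (A : {perm T}) (C1 : {set T}) x y :
  A @: C1 = C1 -> (forall z, z \in C1 -> g (A z) = g z) ->
  x \in C1 -> y \in orbit 'P <[A]> x -> g y = g x.
Proof.
move=> hA hg xC /orbit_iter [n ->]; elim: n => //= n IH.
by rewrite hg ?IH // iter_in.
Qed.

Lemma card_fix t (C1 : {set T}) (A : {perm T}) : A @: C1 = C1 ->
  #|[set g : {ffun T -> 'I_t.+1} | [forall x in C1, g (A x) == g x]]|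
   <= t.+1 ^ #|[set orbit 'P <[A]> x | x in C1]| * t.+1 ^ #|~: C1|.
Proof.
move=> hA.
set O := [set orbit 'P <[A]> x | x in C1].
set Fx := [set g : {ffun T -> 'I_t.+1} | _].
pose F := fun g : {ffun T -> 'I_t.+1} =>
  ([ffun X : {set T} => if X \in O then (if [pick y in X] is Some y then g y else ord0) else ord0],
   [ffun x => if x \in C1 then ord0 else g x]).
have inj : {in Fx &, injective F}.
  move=> g1 g2; rewrite !inE => /forall_inP h1 /forall_inP h2 [e1 e2].
  apply/ffunP => x.
  case: (boolP (x \in C1)) => xC; last first.
    by have := congr1 (fun f : {ffun T -> 'I_t.+1} => f x) e2; rewrite !ffunE (negbTE xC).
  have XO : orbit 'P <[A]> x \in O by apply: imset_f.
  have := congr1 (fun f : {ffun {set T} -> 'I_t.+1} => f (orbit 'P <[A]> x)) e1; rewrite !ffunE XO.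
  case: pickP => [y yX|]; last by move/(_ x); rewrite orbit_refl.
  rewrite (@fix_orbit _ g1 A C1 x) //; last by move=> z zC; apply/eqP/h1.
  by rewrite (@fix_orbit _ g2 A C1 x) //; move=> z zC; apply/eqP/h2.
rewrite -(card_in_imset inj).
have sub : F @: Fx \subset setX [set f in pffun_on ord0 O predT] [set f in pffun_on ord0 (~: C1) predT].
  apply/subsetP => _ /imsetP [g _ ->]; rewrite !inE /=.
  apply/andP; split; apply/pffun_onP; split => //.
  - by apply/subsetP => X; rewrite !inE ffunE; case: (X \in O); rewrite ?eqxx.
  - by apply/subsetP => X; rewrite !inE ffunE; case: (X \in C1); rewrite ?eqxx.
apply: leq_trans (subset_leq_card sub) _.
rewrite cardsX !cardsE !card_pffun_on card_ord.
by rewrite cardsE.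
Qed.
Lemma theta_le (A : {perm T}) (C1 : {set T}) :
  #|[set orbit 'P <[A]> x | x in C1]| <= #|C1|.
Proof. exact: leq_imset_card. Qed.

Lemma theta2 (A : {perm T}) (C1 : {set T}) : A @: C1 = C1 ->
  2 * #|[set orbit 'P <[A]> x | x in C1]| <= #|C1| + #|[set v in C1 | A v == v]|.
Proof.
move=> hA.
set O := [set orbit 'P <[A]> x | x in C1].
set Fx := [set v in C1 | A v == v].
have orbC x y : x \in C1 -> y \in orbit 'P <[A]> x -> y \in C1.
  by move=> xC /orbit_iter [n ->]; apply: iter_in.
have orbA x y : y \in orbit 'P <[A]> x -> A y \in orbit 'P <[A]> x.
  move=> /orbit_iter [n ->]; apply/orbitP; exists (A ^+ n.+1)%g; first exact: mem_cycle.
  by rewrite /= apermE permX.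
have acts : [acts (<[A]>%g), on C1 | 'P].
  apply/subsetP => a /cycleP [n ->]; rewrite inE /=.
  rewrite in_setT inE; apply/subsetP => x xC; rewrite inE apermE permX; exact: iter_in.
have hpart := card_partition (orbit_partition acts).
rewrite -/O in hpart.
set O1 := [set X in O | X \subset Fx].
have hO1 : #|O1| <= #|Fx|.
  apply: leq_trans (leq_imset_card (orbit 'P <[A]>) Fx).
  apply: subset_leq_card; apply/subsetP => X; rewrite inE => /andP [/imsetP [x xC ->] sub].
  by apply: imset_f; apply: (subsetP sub); apply: orbit_refl.
have hs : \sum_(X in O) (X \subset Fx : nat) = #|O1|.
  rewrite -sum1_card [RHS]big_mkcond /= big_mkcond /=; apply: eq_bigr => X _.
  by rewrite inE; case: (X \in O); case: (X \subset Fx).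
have hX X : X \in O -> 2 <= #|X| + (X \subset Fx).
  case/imsetP => x xC ->.
  case: (boolP (orbit 'P <[A]> x \subset Fx)) => sub.
    rewrite addn1 ltnS; apply/card_gt0P; exists x; exact: orbit_refl.
  have [y yX yF] : exists2 y, y \in orbit 'P <[A]> x & y \notin Fx.
    by apply/exists_inP; rewrite -negb_forall_in; apply: contra sub => /forall_inP h; apply/subsetP.
  have yC := orbC _ _ xC yX.
  have Ay : A y != y by move: yF; rewrite inE yC.
  rewrite addn0; have <- : #|[set y; A y]| = 2 by rewrite cards2 eq_sym Ay.
  apply: subset_leq_card.
  by apply/subsetP => z; rewrite !inE => /orP [] /eqP ->; rewrite ?orbA.
have : \sum_(X in O) 2 <= \sum_(X in O) (#|X| + (X \subset Fx)) by apply: leq_sum.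
rewrite big_split /= -hpart hs sum_nat_const mulnC => h.
apply: leq_trans h _; rewrite leq_add2l //.

Qed.
End S.


Lemma INR_expn (m n : nat) : INR (m ^ n) = pow (INR m) n.
Proof.
elim: n => [|n IH]; first by rewrite expn0.
by rewrite expnS -multE mult_INR IH.
Qed.

Lemma ln_pos (n : nat) : 2 <= n -> Rlt 0 (ln (INR n)).
Proof.
move=> hn; rewrite -ln_1; apply: ln_increasing; first lra.
have : Rle (INR 2) (INR n) by apply: le_INR; apply/ssrnat.leP.
simpl; lra.
Qed.

Lemma real_step (c F m t : nat) : 2 <= t -> 2 <= m ->
  Rlt (INR F) (Rminus (INR c) (Rmult (INR 2) (Rdiv (ln (INR m)) (ln (INR t))))) ->
  F < c /\ m ^ 2 < t ^ (c - F).
Proof.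
move=> ht hm h.
have lt := ln_pos ht; have lm := ln_pos hm.
have q : Rlt 0 (Rdiv (ln (INR m)) (ln (INR t))) by apply: Rdiv_lt_0_compat.
have hFc : F < c.
  apply/ssrnat.ltP; apply: INR_lt; simpl in h; lra.
split=> //.
have h2 : Rlt (Rmult 2 (ln (INR m))) (Rmult (Rminus (INR c) (INR F)) (ln (INR t))).
  have e2 : Rmult 2 (ln (INR m)) = Rmult (Rmult 2 (Rdiv (ln (INR m)) (ln (INR t)))) (ln (INR t)).
    field; lra.
  rewrite e2; apply: Rmult_lt_compat_r => //; simpl in h; lra.
have pt : Rlt 0 (INR t) by apply: lt_0_INR; apply/ssrnat.ltP; lia.
have pm : Rlt 0 (INR m) by apply: lt_0_INR; apply/ssrnat.ltP; lia.
apply/ssrnat.ltP; apply: INR_lt; rewrite !INR_expn.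
apply: ln_lt_inv; try (apply: pow_lt => //).
rewrite !ln_pow // -minusE minus_INR; last by apply/ssrnat.leP; lia.
simpl; lra.
Qed.


Lemma stab_group_set (T : finType) (e : rel T) (C1 : {set T}) :
  group_set (stab_aut e C1).
Proof.
apply/group_setP; split.
  rewrite !inE; apply/andP; split.
    by apply/forallP => x; apply/forallP => y; rewrite !perm1.
  by rewrite (eq_imset _ (@perm1 T)) imset_id.
move=> x y; rewrite !inE => /andP [ax /eqP cx] /andP [ay /eqP cy].
apply/andP; split.
  apply/forallP => u; apply/forallP => v; rewrite !permM.
  by rewrite (eqP (forallP (forallP ay _) _)) (eqP (forallP (forallP ax _) _)).
by rewrite (eq_imset _ (permM x y)) imset_comp cx cy.
Qed.

Lemma exists_good (T : finType) (e : rel T) (C1 : {set T}) (t : nat) :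
  (\sum_(A in stab_aut e C1) ((t.+1%:R : rat) ^ (Posz (theta A C1) - Posz #|C1|))
     < (pdiv #|stab_aut e C1|)%:R)%R ->
  exists g : {ffun T -> 'I_t.+1}, forall A, A \in stab_aut e C1 ->
    (forall x, x \in C1 -> g (A x) = g x) -> A = 1%g.
Proof.
set G := stab_aut e C1 => hsum.
pose GG := Group (stab_group_set e C1).
pose Hg (g : {ffun T -> 'I_t.+1}) := [set A in G | [forall x in C1, g (A x) == g x]].
have Hgs g : group_set (Hg g).
  apply/group_setP; split.
    rewrite /Hg in_set; apply/andP; split; first exact: (group1 GG).
    by apply/forall_inP => x _; rewrite perm1.
  move=> x y; rewrite /Hg !in_set => /andP [xG /forall_inP hx] /andP [yG /forall_inP hy].
  have hM := groupM (G:=GG) (x:=x) (y:=y); rewrite /= !inE in hM.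
  rewrite hM //=.
  apply/forall_inP => z zC; rewrite permM.
  have : x z \in C1 by move: xG => /andP [_ /eqP <-]; apply: imset_f.
  by move/hy/eqP ->; apply: hx.
suff [g hg] : exists g, #|Hg g| < pdiv #|G|.
  exists g => A AG hA.
  have le1 : #|Hg g| <= 1.
    rewrite leqNgt; apply/negP => lt1.
    have : pdiv #|G| <= #|Hg g|.
      apply: pdiv_min_dvd => //.
      have -> : #|G| = #|GG| by [].
      have -> : #|Hg g| = #|Group (Hgs g)| by [].
      apply: cardSg; apply/subsetP => B; rewrite /= inE => /andP [].
      done.
    by rewrite leqNgt hg.
  have AH : A \in Hg g by rewrite inE AG; apply/forall_inP => x xC; rewrite hA.
  have OH : (1%g : {perm T}) \in Hg g by apply: group1 (Group (Hgs g)).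
  by have := card_le1_eqP le1 A 1%g AH OH.
case: (boolP [exists g, #|Hg g| < pdiv #|G|]) => [/existsP //|].
rewrite negb_exists => /forallP hall; exfalso.
pose Fx (A : {perm T}) := [set g : {ffun T -> 'I_t.+1} | [forall x in C1, g (A x) == g x]].
have cnt : \sum_g #|Hg g| = \sum_(A in G) #|Fx A|.
  have E1 (g : {ffun T -> 'I_t.+1}) : #|Hg g| = \sum_(A in G) ([forall x in C1, g (A x) == g x] : nat).
    rewrite -sum1_card big_mkcond /= [RHS]big_mkcond /=; apply: eq_bigr => A _.
    by rewrite inE; case: (A \in G); case: [forall _ in _, _].
  have E2 (A : {perm T}) : #|Fx A| = \sum_(g : {ffun T -> 'I_t.+1}) ([forall x in C1, g (A x) == g x] : nat).
    rewrite -sum1_card big_mkcond /=; apply: eq_bigr => g _.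
    by rewrite inE; case: [forall _ in _, _].
  rewrite (eq_bigr _ (fun g _ => E1 g)) exchange_big /=.
  by apply: eq_bigr => A _; rewrite E2.
have low : pdiv #|G| * t.+1 ^ #|T| <= \sum_g #|Hg g|.
  rewrite -{1}(card_ord t.+1) -card_ffun mulnC -sum_nat_const.
  by apply: leq_sum => g _; rewrite leqNgt hall.
have up : \sum_(A in G) #|Fx A| <= \sum_(A in G) (t.+1 ^ theta A C1 * t.+1 ^ #|~: C1|).
  apply: leq_sum => A; rewrite inE => /andP [_ /eqP hA].
  exact: card_fix.
have := leq_trans low (leq_trans (eq_leq cnt) up).
rewrite -(ler_nat rat) natrM natr_sum.
apply/negP; rewrite -ltNge.
have tn0 : (t.+1%:R : rat) != 0%R by rewrite pnatr_eq0.
have := hsum; rewrite -(ltr_pM2r (exprn_gt0 #|T| (ltr0Sn rat t))) mulr_suml.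
rewrite natrX; move=> h; apply: le_lt_trans h; apply: ler_sum => A _; rewrite natrM !natrX.
rewrite -(cardsC C1) exprD mulrA; rewrite le_eqVlt; apply/orP; left; apply/eqP; congr (_ * _)%R; symmetry.
rewrite -[((t.+1)%:R ^+ #|C1|)%R]/((t.+1)%:R ^ (Posz #|C1|))%R -expfzDr // subrK.
by [].
Qed.


Lemma bigmin_le (I : eqType) (r : seq I) (P : pred I) (F : I -> nat) x j :
  j \in r -> P j -> \big[minn/x]_(j <- r | P j) F j <= F j.
Proof.
elim: r => // a r IH; rewrite inE big_cons => /orP [/eqP -> Pj| jr Pj].
  by rewrite Pj geq_minl.
by case: (P a); rewrite ?geq_min IH ?orbT.
Qed.

Lemma chiD_le (T : finType) (e : rel T) k : has_pd_col e k -> chiD e <= k.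
Proof.
move=> hk; rewrite /chiD.
case: (leqP k #|T|) => hkT.
  have hk' : k < #|T|.+1 by [].
  exact: (bigmin_le _ _ (j := Ordinal hk') (mem_index_enum _) hk).
apply: leq_trans (ltnW hkT).
elim/big_ind: _ => //.
  by move=> x y hx hy; rewrite geq_min hx.
by move=> j _; rewrite -ltnS.
Qed.

Lemma part1 (T : finType) (e : rel T)
  (c : T -> 'I_(chi e)) (c_proper : proper_col e c) (i : 'I_(chi e)) (t : nat) :
  2 <= t ->
  (exists g : {ffun T -> 'I_t}, forall A, A \in stab_aut e (color_class c i) ->
    (forall x, x \in color_class c i -> g (A x) = g x) -> A = 1%g) ->
  chiD e <= chi e + t - 1.
Proof.
set C1 := color_class c i => ht [g hg].
apply: chiD_le.
set k := chi e + t - 1.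
have hle : chi e <= k by rewrite /k; lia.
pose nval x : nat := if x \in C1 then (if (g x : nat) == 0 then (i : nat) else chi e + g x - 1)
   else c x.
have inC x : (x \in C1) = (c x == i) by rewrite /C1 /color_class inE.
have ilt : (i : nat) < chi e by [].
have nlt x : nval x < k.
  rewrite /nval; case: (x \in C1); last by have := ltn_ord (c x); rewrite /k; lia.
  by case: eqP => h; have := ltn_ord (g x); rewrite /k; lia.
pose col := [ffun x => insubd (widen_ord hle i) (nval x)] : {ffun T -> 'I_k}.
have colE x : (col x : nat) = nval x by rewrite ffunE val_insubd nlt.
have key x y : nval x = nval y -> ((x \in C1) = (y \in C1)) /\ (x \in C1 -> g x = g y).
  rewrite /nval; have cx := ltn_ord (c x); have cy := ltn_ord (c y).
  case: (boolP (x \in C1)) => hx; case: (boolP (y \in C1)) => hy h.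
  - split=> // _; move: h; case: eqP => gx; case: eqP => gy; try lia.
      by move=> _; apply: val_inj; rewrite /= gx gy.
    by move=> h; apply: ord_inj; move: h; lia.
  - move: hy; rewrite inC => /eqP hy.
    have hy' : (c y : nat) <> i by move=> h2; apply: hy; apply: ord_inj.
    by move: h; case: eqP; lia.
  - move: hx; rewrite inC => /eqP hx.
    have hx' : (c x : nat) <> i by move=> h2; apply: hx; apply: ord_inj.
    by move: h; case: eqP; lia.
  - by split.
apply/existsP; exists col; apply/andP; split.
  apply/forallP => x; apply/forallP => y; apply/implyP => exy.
  have cxy := forallP (forallP c_proper x) y; rewrite exy /= in cxy.
  apply/negP => /eqP /(congr1 (@nat_of_ord k)); rewrite !colE => hn.
  have [hm hgg] := key x y hn.
  case: (boolP (x \in C1)) => hx.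
    have hy : y \in C1 by rewrite -hm.
    by move: hx hy cxy; rewrite !inC => /eqP -> /eqP ->; rewrite eqxx.
  have hy : y \notin C1 by rewrite -hm.
  move: hn; rewrite /nval (negbTE hx) (negbTE hy) => h.
  by move: cxy; rewrite (val_inj h) eqxx.
apply/forallP => f; apply/implyP => /andP [af /forallP hcl].
have hn x : nval (f x) = nval x.
  have := hcl (col x); set K := color_class col (col x).
  have xK : x \in K by rewrite /K /color_class inE.
  move=> /eqP hK.
  have : f x \in K by rewrite -hK imset_f.
  by rewrite /K /color_class inE -!colE => /eqP ->.
have fG : f \in stab_aut e C1.
  rewrite /stab_aut inE /Aut inE af /=.
  rewrite eqEcard card_imset ?leqnn ?andbT; last exact: perm_inj.
  by apply/subsetP => _ /imsetP [x xC ->]; rewrite (key _ _ (hn x)).1.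
apply/eqP; apply: hg fG _ => x xC.
by apply: (key _ _ (hn x)).2; rewrite (key _ _ (hn x)).1.
Qed.

Lemma texp (t th c : nat) : th <= c ->
  ((t%:R : rat) ^ (Posz th - Posz c))%R = (((t ^ (c - th))%:R)^-1)%R.
Proof.
move=> h; rewrite -(opprB (Posz c)) subzn // -invr_expz natrX //.
Qed.

Theorem mainTheorem1 (T : finType) (e : rel T)
  (e_sym : symmetric e) (e_irr : irreflexive e)
  (c : T -> 'I_(chi e)) (c_proper : proper_col e c) (i : 'I_(chi e)) :
  let C1 := color_class c i in
  let G := stab_aut e C1 in
  (2 <= #|G|)%N ->
  (forall t : nat, (2 <= t)%N ->
     (\sum_(A in G) ((t%:R : rat) ^ (Posz (theta A C1) - Posz #|C1|)) < (pdiv #|G|)%:R)%R ->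
     (chiD e <= chi e + t - 1)%N)
  /\
  (forall t : nat, (2 <= t)%N ->
     Rlt (INR (Ffix e C1))
        (Rminus (INR #|C1|) (Rmult (INR 2) (Rdiv (ln (INR #|G|)) (ln (INR t))))) ->
     (chiD e <= chi e + t - 1)%N).
Proof.
move=> C1 G hG.
have P1 : forall t : nat, (2 <= t)%N ->
     (\sum_(A in G) ((t%:R : rat) ^ (Posz (theta A C1) - Posz #|C1|)) < (pdiv #|G|)%:R)%R ->
     (chiD e <= chi e + t - 1)%N.
  move=> [|[|t]] // ht hsum; apply: (part1 c_proper ht); exact: exists_good hsum.
split; first exact: P1.
move=> t ht hR; apply: P1 => //.
have [hFc hpow] := real_step ht hG hR.
have tp : 0 < t := ltnW ht.
pose GG := Group (stab_group_set e C1).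
have one : (1%g : {perm T}) \in G := group1 GG.
have m0 : (#|G|%:R : rat) != 0%R by rewrite pnatr_eq0; case: #|G| hG.
have mpos : (0 < (#|G|%:R : rat))%R by rewrite ltr0n; case: #|G| hG.
have term1 : ((t%:R : rat) ^ (Posz (theta 1%g C1) - Posz #|C1|) <= 1)%R.
  rewrite texp ?theta_le //.
  rewrite invr_le1; last by rewrite ltr0n expn_gt0 tp.
    by rewrite ler1n expn_gt0 tp.
  by rewrite unitfE pnatr_eq0 -lt0n expn_gt0 tp.
have termA A : A \in G -> A != 1%g ->
    ((t%:R : rat) ^ (Posz (theta A C1) - Posz #|C1|) <= #|G|%:R^-1)%R.
  move=> AG A1.
  have fA : #|[set v in C1 | A v == v]| <= Ffix e C1.
    by apply: (leq_bigmax_cond (P := fun B => B \in stab_aut e C1 :\ 1%g)); rewrite in_setD1 A1 AG.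
  have hA : A @: C1 = C1 by move: AG; rewrite inE => /andP [_ /eqP].
  have h2 := theta2 hA.
  have hth := theta_le A C1.
  have ltm : #|G| < t ^ (#|C1| - theta A C1).
    rewrite ltnNge; apply/negP => hle.
    have a1 : t ^ (#|C1| - Ffix e C1) <= (t ^ (#|C1| - theta A C1)) ^ 2.
      rewrite -expnM; apply: leq_pexp2l; [exact: tp|].
      move: h2 fA hth hFc; rewrite -/(theta A C1).
      move: (theta A C1) #|C1| (Ffix e C1) #|[set v in C1 | A v == v]| => a b f g.
      clear -a b f g; lia.
    have a2 : (t ^ (#|C1| - theta A C1)) ^ 2 <= #|G| ^ 2 by rewrite leq_exp2r.
    by have := leq_trans hpow (leq_trans a1 a2); rewrite ltnn.
  rewrite texp // lef_pV2.
  - by rewrite ler_nat; apply: ltnW.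
  - by rewrite posrE ltr0n expn_gt0 tp.
  - by rewrite posrE.
rewrite (bigD1 1%g) //=.
have hS : (\sum_(A in G | A != 1%g) (t%:R : rat) ^ (Posz (theta A C1) - Posz #|C1|)
          <= \sum_(A in G | A != 1%g) (#|G|%:R^-1 : rat))%R.
  by apply: ler_sum => A /andP [AG A1]; apply: termA.
have hc : (\sum_(A in G) (#|G|%:R^-1 : rat) = 1)%R.
  by rewrite sumr_const -(mulr_natr (#|G|%:R^-1 : rat)) mulVf.
rewrite (bigD1 1%g) //= in hc.
have p2 : (2 <= pdiv #|G|)%N by apply: prime_gt1; apply: pdiv_prime.
apply: (lt_le_trans (y := (2%:R : rat)%R)); last by rewrite ler_nat.
have hi : (0 < (#|G|%:R^-1 : rat))%R by rewrite invr_gt0.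
have e2 : (2%:R : rat) = (1 + 1)%R by rewrite mulr2n.
rewrite e2.
apply: (le_lt_trans (y := (1 + \sum_(A in G | A != 1%g) (#|G|%:R^-1 : rat))%R)).
  by apply: lerD.
rewrite ltrD2l -[X in (_ < X)%R]hc -subr_gt0 addrK.
exact: hi.
Qed.
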